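(* Let $(y_1,x_1),\dots,(y_\ell,x_\ell)\in\mathbb{R}^3\times\mathbb{R}^3$ and $c_1^2,\dots,c_\ell^2\ge 0$. Then strong duality holds between (SDR) and (D), i.e., the optimal values of (SDR) and (D) are equal.
   Context: For $w\in\mathbb{S}^3$ (unit sphere of $\mathbb{R}^4$), $R(w)\in SO(3)$ denotes the rotation matrix associated to the unit quaternion $w=[w_1;w_2;w_3;w_4]$ by the standard formula $R(w)=\begin{bmatrix} w_1^2+w_2^2-w_3^2-w_4^2 & 2(w_2w_3-w_1w_4) & 2(w_2w_4+w_1w_3)\\ 2(w_2w_3+w_1w_4) & w_1^2+w_3^2-w_2^2-w_4^2 & 2(w_3w_4-w_1w_2)\\ 2(w_2w_4-w_1w_3) & 2(w_3w_4+w_1w_2) & w_1^2+w_4^2-w_2^2-w_3^2\end{bmatrix}$. For each $i$, $Q_i$ is the unique symmetric $4\times4$ matrix with $w^\top Q_i w=\|y_i-R(w)x_i\|_2^2$ for all $w\in\mathbb{S}^3$. For a matrix $\mathcal{A}\in\mathbb{R}^{4(\ell+1)\times 4(\ell+1)}$ and $i,j\in\{0,\dots,\ell\}$, $[\mathcal{A}]_{ij}$ is the $4\times 4$ block with rows $4i+1,\dots,4i+4$ and columns $4j+1,\dots,4j+4$. $\mathcal{Q}$ is the symmetric $4(\ell+1)\times4(\ell+1)$ matrix with $[\mathcal{Q}]_{0i}=[\mathcal{Q}]_{i0}=\tfrac12(Q_i-c_i^2I_4)$ for $i=1,\dots,\ell$ and all other blocks zero. (SDR) is the problem: minimize $\operatorname{tr}(\mathcal{Q}\mathcal{W})+\sum_{i=1}^\ell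 c_i^2$ over symmetric positive semidefinite $\mathcal{W}\in\mathbb{R}^{4(\ell+1)\times4(\ell+1)}$ subject to $[\mathcal{W}]_{0i}=[\mathcal{W}]_{ii}$ for $i=1,\dots,\ell$ and $\operatorname{tr}([\mathcal{W}]_{00})=1$. $\mathcal{B}$ is the $4(\ell+1)\times4(\ell+1)$ matrix that is zero except $[\mathcal{B}]_{00}=I_4$. An admissible dual matrix is a symmetric $\mathcal{D}\in\mathbb{R}^{4(\ell+1)\times4(\ell+1)}$ with $[\mathcal{D}]_{ii}+2[\mathcal{D}]_{0i}=0$ for $i=1,\dots,\ell$ and all blocks other than $[\mathcal{D}]_{ii},[\mathcal{D}]_{0i},[\mathcal{D}]_{i0}$ ($i\ge1$) equal to zero. (D) is the problem: maximize $\mu+\sum_{i=1}^\ell c_i^2$ over $\mu\in\mathbb{R}$ and admissible dual matrices $\mathcal{D}$ subject to $\mathcal{Q}-\mu\mathcal{B}-\mathcal{D}\succeq 0$. *)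

(* Defs.v *)
From HB Require Import structures.
From mathcomp Require Import all_boot all_order all_algebra zify.
From mathcomp Require Import classical_sets reals constructive_ereal ereal.
Set Implicit Arguments.
Unset Strict Implicit.
Unset Printing Implicit Defensive.
Import Order.TTheory GRing.Theory Num.Theory.
Local Open Scope ring_scope.

Section Defs.
Variable R : realType.

(* w = [w1;w2;w3;w4] : coordinate k (k = 0..3 stands for w_{k+1}) *)
Definition wc (w : 'cV[R]_4) (k : nat) : R := w (inord k) 0.

Definition rotq (w : 'cV[R]_4) : 'M[R]_3 :=
  let w1 := wc w 0 in let w2 := wc w 1 in let w3 := wc w 2 in let w4 := wc w 3 in
  \matrix_(i < 3, j < 3)
   match nat_of_ord i, nat_of_ord j with
   | 0, 0 => w1^+2 + w2^+2 - w3^+2 - w4^+2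
   | 0, 1 => 2 * (w2 * w3 - w1 * w4)
   | 0, _ => 2 * (w2 * w4 + w1 * w3)
   | 1, 0 => 2 * (w2 * w3 + w1 * w4)
   | 1, 1 => w1^+2 + w3^+2 - w2^+2 - w4^+2
   | 1, _ => 2 * (w3 * w4 - w1 * w2)
   | _, 0 => 2 * (w2 * w4 - w1 * w3)
   | _, 1 => 2 * (w3 * w4 + w1 * w2)
   | _, _ => w1^+2 + w4^+2 - w2^+2 - w3^+2
   end.

Definition sqnorm n (v : 'cV[R]_n) : R := \sum_i (v i 0) ^+ 2.

Definition qform n (A : 'M[R]_n) (v : 'cV[R]_n) : R := (v^T *m A *m v) 0 0.

Definition psd n (A : 'M[R]_n) : Prop :=
  A^T = A /\ forall v : 'cV[R]_n, 0 <= qform A v.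

End Defs.

Lemma bidx_proof n (i : 'I_n) (a : 'I_4) : (4 * i + a < 4 * n)%N.
Proof. have := ltn_ord i; have := ltn_ord a; lia. Qed.

Definition bidx n (i : 'I_n) (a : 'I_4) : 'I_(4 * n) := Ordinal (bidx_proof i a).

Definition blk (R : Type) n (A : 'M[R]_(4 * n)) (i j : 'I_n) : 'M[R]_4 :=
  \matrix_(a < 4, b < 4) A (bidx i a) (bidx j b).

Lemma bdiv_proof n (p : 'I_(4 * n)) : (p %/ 4 < n)%N.
Proof. have := ltn_ord p; lia. Qed.
Lemma bmod_proof n (p : 'I_(4 * n)) : (p %% 4 < 4)%N.
Proof. lia. Qed.

Definition mkblk (R : Type) n (F : 'I_n -> 'I_n -> 'M[R]_4) : 'M[R]_(4 * n) :=
  \matrix_(p, q) F (Ordinal (bdiv_proof p)) (Ordinal (bdiv_proof q))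
                   (Ordinal (bmod_proof p)) (Ordinal (bmod_proof q)).

Section Problem.
Variable R : realType.
Variable l : nat.
Variables (Q : 'I_l -> 'M[R]_4) (c2 : 'I_l -> R).
(* block indices 0..l are 'I_l.+1; data index k : 'I_l corresponds to block lift ord0 k = k+1 *)

Definition Qcal : 'M[R]_(4 * l.+1) :=
  mkblk (fun i j : 'I_l.+1 =>
    match unlift ord0 i, unlift ord0 j with
    | None, Some k => 2^-1 *: (Q k - (c2 k)%:M)
    | Some k, None => 2^-1 *: (Q k - (c2 k)%:M)
    | _, _ => 0
    end).

Definition Bcal : 'M[R]_(4 * l.+1) :=
  mkblk (fun i j : 'I_l.+1 => if (i == ord0) && (j == ord0) then 1%:M else 0).

Definition SDR_feasible (W : 'M[R]_(4 * l.+1)) : Prop :=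
  psd W /\
  (forall k : 'I_l, blk W ord0 (lift ord0 k) = blk W (lift ord0 k) (lift ord0 k)) /\
  \tr (blk W ord0 ord0) = 1.

Definition SDR_obj (W : 'M[R]_(4 * l.+1)) : R := \tr (Qcal *m W) + \sum_k c2 k.

Definition admissible_dual (D : 'M[R]_(4 * l.+1)) : Prop :=
  D^T = D /\
  (forall k : 'I_l,
     blk D (lift ord0 k) (lift ord0 k) + 2%:R *: blk D ord0 (lift ord0 k) = 0) /\
  (forall i j : 'I_l.+1,
     ~ ((i == j) && (i != ord0) || (i == ord0) && (j != ord0) || (j == ord0) && (i != ord0)) ->
     blk D i j = 0).

Definition D_feasible (mu : R) (D : 'M[R]_(4 * l.+1)) : Prop :=
  admissible_dual D /\ psd (Qcal - mu *: Bcal - D).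

Definition D_obj (mu : R) : R := mu + \sum_k c2 k.

Definition SDR_value : \bar R :=
  ereal_inf [set (SDR_obj W)%:E | W in SDR_feasible].

Definition D_value : \bar R :=
  ereal_sup [set (D_obj mu)%:E | mu in [set mu | exists D, D_feasible mu D]].

End Problem.

(* Main.v *)
Require Import Defs.
From HB Require Import structures.
From mathcomp Require Import all_boot all_order all_algebra.
From mathcomp Require Import classical_sets reals constructive_ereal ereal.
From mathcomp Require Import zify ring lra.
From mathcomp Require Import boolp topology normedtype derive.
Import Order.TTheory GRing.Theory Num.Theory.
Import numFieldTopology.Exports numFieldNormedType.Exports.
Local Open Scope ring_scope.
Set Implicit Arguments.
Unset Strict Implicit.
Unset Printing Implicit Defensive.

Section Forms.
Variable R : realType.

Definition frob m (A B : 'M[R]_m) : R := \tr (A *m B^T).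
Definition bil m (u : 'cV[R]_m) (A : 'M[R]_m) (w : 'cV[R]_m) : R := (u^T *m A *m w) 0 0.

Lemma qformE m (A : 'M[R]_m) v : qform A v = bil v A v.
Proof. by []. Qed.

Lemma frobDl m (A B C : 'M[R]_m) : frob (A + B) C = frob A C + frob B C.
Proof. by rewrite /frob mulmxDl mxtraceD. Qed.
Lemma frobZl m c (A C : 'M[R]_m) : frob (c *: A) C = c * frob A C.
Proof. by rewrite /frob -scalemxAl mxtraceZ. Qed.
Lemma frobNl m (A C : 'M[R]_m) : frob (- A) C = - frob A C.
Proof. by rewrite -scaleN1r frobZl mulN1r. Qed.
Lemma frobBl m (A B C : 'M[R]_m) : frob (A - B) C = frob A C - frob B C.
Proof. by rewrite frobDl frobNl. Qed.
Lemma frob0l m (C : 'M[R]_m) : frob 0 C = 0.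
Proof. by rewrite /frob mul0mx mxtrace0. Qed.
Lemma frobC m (A B : 'M[R]_m) : frob A B = frob B A.
Proof. by rewrite /frob -mxtrace_tr trmx_mul trmxK. Qed.
Lemma frobDr m (A B C : 'M[R]_m) : frob C (A + B) = frob C A + frob C B.
Proof. by rewrite frobC frobDl !(frobC C). Qed.
Lemma frobZr m c (A C : 'M[R]_m) : frob C (c *: A) = c * frob C A.
Proof. by rewrite frobC frobZl frobC. Qed.
Lemma frobNr m (A C : 'M[R]_m) : frob C (- A) = - frob C A.
Proof. by rewrite frobC frobNl frobC. Qed.
Lemma frobBr m (A B C : 'M[R]_m) : frob C (A - B) = frob C A - frob C B.
Proof. by rewrite frobDr frobNr. Qed.
Lemma frob0r m (C : 'M[R]_m) : frob C 0 = 0.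
Proof. by rewrite frobC frob0l. Qed.
Lemma frob_suml m (I : Type) (r : seq I) (P : pred I) (F : I -> 'M[R]_m) C :
  frob (\sum_(k <- r | P k) F k) C = \sum_(k <- r | P k) frob (F k) C.
Proof.
elim/big_rec2: _ => [|k y1 y2 _ <-]; first by rewrite frob0l.
by rewrite frobDl.
Qed.
Lemma frob_sumr m (I : Type) (r : seq I) (P : pred I) (F : I -> 'M[R]_m) C :
  frob C (\sum_(k <- r | P k) F k) = \sum_(k <- r | P k) frob C (F k).
Proof.
rewrite frobC frob_suml; apply: eq_bigr => k _; by rewrite frobC.
Qed.
Lemma frob_tr m (A B : 'M[R]_m) : frob A^T B^T = frob A B.
Proof. by rewrite /frob -trmx_mul mxtrace_tr mxtrace_mulC. Qed.

Lemma mx11_mul (x y : 'M[R]_1) : (x *m y) 0 0 = x 0 0 * y 0 0.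
Proof. by rewrite mxE big_ord1. Qed.

Lemma qform_frob m (A : 'M[R]_m) v : qform A v = frob A (v *m v^T).
Proof.
rewrite /frob /qform trmx_mul trmxK mulmxA mxtrace_mulC mulmxA.
by rewrite /mxtrace big_ord1.
Qed.

Lemma bilDl m (u1 u2 w : 'cV[R]_m) A : bil (u1 + u2) A w = bil u1 A w + bil u2 A w.
Proof. by rewrite /bil linearD /= !mulmxDl mxE. Qed.
Lemma bilDr m (u w1 w2 : 'cV[R]_m) A : bil u A (w1 + w2) = bil u A w1 + bil u A w2.
Proof. by rewrite /bil mulmxDr mxE. Qed.
Lemma bilZl m c (u w : 'cV[R]_m) A : bil (c *: u) A w = c * bil u A w.
Proof. by rewrite /bil linearZ /= -!scalemxAl mxE. Qed.
Lemma bilZr m c (u w : 'cV[R]_m) A : bil u A (c *: w) = c * bil u A w.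
Proof. by rewrite /bil -scalemxAr mxE. Qed.
Lemma bilNl m (u w : 'cV[R]_m) A : bil (- u) A w = - bil u A w.
Proof. by rewrite -scaleN1r bilZl mulN1r. Qed.
Lemma bilNr m (u w : 'cV[R]_m) A : bil u A (- w) = - bil u A w.
Proof. by rewrite -scaleN1r bilZr mulN1r. Qed.
Lemma bilDm m (u w : 'cV[R]_m) A B : bil u (A + B) w = bil u A w + bil u B w.
Proof. by rewrite /bil mulmxDr mulmxDl mxE. Qed.
Lemma bilNm m (u w : 'cV[R]_m) A : bil u (- A) w = - bil u A w.
Proof. by rewrite /bil mulmxN mulNmx mxE. Qed.
Lemma bilBm m (u w : 'cV[R]_m) A B : bil u (A - B) w = bil u A w - bil u B w.
Proof. by rewrite bilDm bilNm. Qed.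
Lemma bilZm m c (u w : 'cV[R]_m) A : bil u (c *: A) w = c * bil u A w.
Proof. by rewrite /bil -scalemxAr -scalemxAl mxE. Qed.
Lemma bil_summ m (I : Type) (r : seq I) (P : pred I) (F : I -> 'M[R]_m) u w :
  bil u (\sum_(k <- r | P k) F k) w = \sum_(k <- r | P k) bil u (F k) w.
Proof.
elim/big_rec2: _ => [|k y1 y2 _ <-]; first by rewrite /bil mulmx0 mul0mx mxE.
by rewrite bilDm.
Qed.
Lemma bil_sym m (u w : 'cV[R]_m) A : A^T = A -> bil u A w = bil w A u.
Proof.
move=> sA; rewrite /bil.
have E : (w^T *m A *m u)^T = u^T *m A *m w by rewrite !trmx_mul trmxK sA mulmxA.
by rewrite -E mxE.
Qed.
Lemma bil_cong m k (M : 'M[R]_(k, m)) (u w : 'cV[R]_m) (A : 'M[R]_k) :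
  bil (M *m u) A (M *m w) = bil u (M^T *m A *m M) w.
Proof. by rewrite /bil trmx_mul !mulmxA. Qed.
Lemma qform_cong m k (M : 'M[R]_(k, m)) (v : 'cV[R]_m) (A : 'M[R]_k) :
  qform (M^T *m A *m M) v = qform A (M *m v).
Proof. by rewrite !qformE bil_cong. Qed.

Lemma qformDZ m (A : 'M[R]_m) (u w : 'cV[R]_m) t : A^T = A ->
  qform A (u + t *: w) = qform A u + 2 * t * bil u A w + t ^+ 2 * qform A w.
Proof.
move=> sA; rewrite !qformE bilDl !bilDr !bilZl !bilZr (bil_sym w _ sA).
by ring.
Qed.

Lemma bil_delta m (A : 'M[R]_m) p q :
  bil (delta_mx p 0) A (delta_mx q 0) = A p q.
Proof.
rewrite /bil mxE.
under eq_bigr do rewrite !mxE.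
under eq_bigr do under eq_bigr do rewrite !mxE.
have H : forall (x : 'I_m) (f : 'I_m -> R), \sum_j ((j == x) && (0 == 0 :> 'I_1))%:R * f j = f x.
  move=> x f; rewrite (bigD1 x) //= eqxx mul1r big1 ?addr0 // => j /negbTE ->.
  by rewrite mul0r.
under eq_bigr do rewrite H.
rewrite (bigD1 q) //= eqxx mulr1 big1 ?addr0 // => j /negbTE ->.
by rewrite mulr0.
Qed.

Lemma psd_diag m (W : 'M[R]_m) p : psd W -> 0 <= W p p.
Proof. by move=> [_ H]; have := H (delta_mx p 0); rewrite qformE bil_delta. Qed.

Lemma psd_zero m (W : 'M[R]_m) p q : psd W -> W p p = 0 -> W q p = 0.
Proof.
move=> [sW H] Wpp; apply/eqP/negP => /negP nz.
pose t := - (W q q + 1) / (2 * W q p).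
have := H (delta_mx q 0 + t *: delta_mx p 0).
rewrite qformDZ // !qformE !bil_delta Wpp mulr0 addr0.
have -> : 2 * t * W q p = - (W q q + 1) by rewrite /t; field; rewrite ?mulf_neq0 ?nz //.
lra.
Qed.

Lemma psd_sym m (W : 'M[R]_m) p q : psd W -> W p q = W q p.
Proof. by move=> [sW _]; rewrite -{1}sW mxE. Qed.


Lemma mul_delta_col m (W : 'M[R]_m) p0 q : (W *m (delta_mx p0 0 : 'cV[R]_m)) q 0 = W q p0.
Proof.
rewrite mxE (bigD1 p0) //= mxE !eqxx mulr1 big1 ?addr0 // => j /negbTE hj.
by rewrite mxE hj mulr0.
Qed.

Lemma frob_psd_aux m (P : 'M[R]_m) : psd P -> forall d (W : 'M[R]_m), psd W ->
  (forall p q : 'I_m, (p + d < m)%N -> W q p = 0) -> 0 <= frob P W.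
Proof.
move=> pP; elim=> [|d IH] W pW hW.
  have -> : W = 0 by apply/matrixP => q p; rewrite mxE hW // addn0.
  by rewrite frob0r.
case: (ltnP d m) => dm; last first.
  by apply: IH => // p q hp; exfalso; move: hp; lia.
have p0m : (m - d.+1 < m)%N by lia.
pose p0 := Ordinal p0m.
have hW' : forall p q : 'I_m, (p + d < m)%N -> p != p0 -> W q p = 0.
  move=> p q h1 h2; apply: hW; move: h2 => /eqP h2.
  have : nat_of_ord p <> nat_of_ord p0 by move=> e; apply: h2; apply: val_inj.
  rewrite /=; lia.
have [w0|wn0] := eqVneq (W p0 p0) 0.
  apply: IH => // p q hp; have [->|ne] := eqVneq p p0; first exact: psd_zero.
  exact: hW'.
have wpos : 0 < W p0 p0 by rewrite lt_def wn0 psd_diag.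
set w := W p0 p0 in wn0 wpos.
pose e : 'cV[R]_m := delta_mx p0 0.
pose c := W *m e.
pose W' := W - w^-1 *: (c *m c^T).
have sW : W^T = W by case: pW.
have E1 : forall q p, W' q p = W q p - w^-1 * (W q p0 * W p p0).
  move=> q p.
  have cc : (c *m c^T) q p = W q p0 * W p p0.
    by rewrite mxE big_ord1 [c^T 0 p]mxE /c !mul_delta_col.
  by rewrite -cc /W' !mxE.
have pW' : psd W'.
  split.
    by rewrite /W' linearB /= linearZ /= trmx_mul trmxK sW.
  move=> v.
  pose b := bil v W e.
  have qc : qform (c *m c^T) v = b * b.
    rewrite qformE /bil mulmxA -mulmxA mx11_mul.
    have -> : (c^T *m v) 0 0 = bil e W v by rewrite /c trmx_mul sW.
    rewrite bil_sym // /b /bil /c mulmxA.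
    by [].
  have Q1 : qform W' v = qform W v - w^-1 * (b * b).
    by rewrite /W' qformE bilBm bilZm -!qformE qc.
  have Q2 := qformDZ v e (- (b / w)) sW.
  have qe : qform W e = w by rewrite qformE bil_delta.
  rewrite qe -/b in Q2.
  case: pW => _ pW.
  have := pW (v + - (b / w) *: e); rewrite Q2 Q1.
  have -> : qform W v + 2 * - (b / w) * b + (- (b / w)) ^+ 2 * w = qform W v - w^-1 * (b * b).
    by field.
  by [].
have hW'' : forall p q : 'I_m, (p + d < m)%N -> W' q p = 0.
  move=> p q hp; rewrite E1.
  have [->|ne] := eqVneq p p0; first by rewrite -/w; field.
  rewrite (hW' p q) // (psd_sym p p0 pW) (hW' p p0) //.
  by rewrite ?mul0r ?mulr0 ?subr0.
have -> : W = W' + w^-1 *: (c *m c^T) by rewrite /W' subrK.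
rewrite frobDr frobZr -qform_frob.
apply: addr_ge0; first exact: IH.
apply: mulr_ge0; first by rewrite invr_ge0 ltW.
by case: pP.
Qed.

Lemma frob_psd m (P W : 'M[R]_m) : psd P -> psd W -> 0 <= frob P W.
Proof.
move=> pP pW; apply: (frob_psd_aux pP (d := m)) => // p q hp.
by exfalso; move: hp; lia.
Qed.


Lemma qformDm m (A B : 'M[R]_m) v : qform (A + B) v = qform A v + qform B v.
Proof. by rewrite !qformE bilDm. Qed.
Lemma qformZm m c (A : 'M[R]_m) v : qform (c *: A) v = c * qform A v.
Proof. by rewrite !qformE bilZm. Qed.
Lemma qformBm m (A B : 'M[R]_m) v : qform (A - B) v = qform A v - qform B v.
Proof. by rewrite !qformE bilBm. Qed.
Lemma qform_summ m (I : Type) (r : seq I) (P : pred I) (F : I -> 'M[R]_m) v :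
  qform (\sum_(k <- r | P k) F k) v = \sum_(k <- r | P k) qform (F k) v.
Proof. by rewrite qformE bil_summ. Qed.

Lemma psd_scale m c (A : 'M[R]_m) : 0 <= c -> psd A -> psd (c *: A).
Proof.
move=> c0 [sA qA]; split; first by rewrite linearZ /= sA.
by move=> v; rewrite qformZm mulr_ge0.
Qed.

Lemma qform1_gt0 m (v : 'cV[R]_m) : v != 0 -> 0 < qform 1%:M v.
Proof.
move=> nz; rewrite qformE /bil mulmx1 mxE.
case: (pickP (fun i => v i 0 != 0)) => [i hi | H]; last first.
  exfalso; move/negP: nz; apply; apply/eqP/matrixP => i j.
  by rewrite (ord1 j) mxE; have := H i => /negbFE /eqP.
rewrite (bigD1 i) //= mxE ltr_pwDl //.
  by rewrite -expr2 lt_def sqrf_eq0 hi sqr_ge0.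
by apply: sumr_ge0 => j _; rewrite mxE -expr2 sqr_ge0.
Qed.

Lemma qform1_ge0 m (v : 'cV[R]_m) : 0 <= qform 1%:M v.
Proof.
have [->|nz] := eqVneq v 0; last exact: ltW (qform1_gt0 nz).
by rewrite qformE /bil mulmx0 mxE.
Qed.

Lemma qform0v m (A : 'M[R]_m) : qform A 0 = 0.
Proof. by rewrite qformE /bil mulmx0 mxE. Qed.

Lemma mx11_trE (A : 'M[R]_1) : A^T 0 0 = A 0 0.
Proof. by rewrite mxE. Qed.

Lemma unit_pd m (A : 'M[R]_m) : (forall v : 'cV[R]_m, v != 0 -> 0 < qform A v) ->
  A \in unitmx.
Proof.
move=> H; rewrite -row_free_unit -kermx_eq0.
apply/eqP/row_matrixP => i; rewrite row0.
set u := row i (kermx A).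
have uA : u *m A = 0 by rewrite /u -row_mul mulmx_ker row0.
apply/eqP/negP => /negP nz.
have nz' : u^T != 0 by rewrite trmx_eq0.
have := H _ nz'.
by rewrite qformE /bil trmxK uA mul0mx mxE ltxx.
Qed.


Lemma bil_cong2 m k (M1 M2 : 'M[R]_(k, m)) (u w : 'cV[R]_m) (A : 'M[R]_k) :
  bil (M1 *m u) A (M2 *m w) = bil u (M1^T *m A *m M2) w.
Proof. by rewrite /bil trmx_mul !mulmxA. Qed.
Lemma bil_trm m (u w : 'cV[R]_m) (A : 'M[R]_m) : bil u A^T w = bil w A u.
Proof.
rewrite /bil.
have E : (w^T *m A *m u)^T = u^T *m A^T *m w by rewrite !trmx_mul trmxK mulmxA.
by rewrite -E mxE.
Qed.

End Forms.


Section Blocks.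
Variable R : realType.
Variable n : nat.

Definition sel (i : 'I_n) : 'M[R]_(4, 4 * n) := \matrix_(a, q) ((q == bidx i a)%:R).

Definition bdo (p : 'I_(4 * n)) : 'I_n := Ordinal (bdiv_proof p).
Definition bmo (p : 'I_(4 * n)) : 'I_4 := Ordinal (bmod_proof p).

Lemma bidx_eq (i : 'I_n) (a : 'I_4) (p : 'I_(4 * n)) :
  (p == bidx i a) = (i == bdo p) && (a == bmo p).
Proof.
apply/eqP/andP => [-> | [/eqP -> /eqP ->]].
  split; apply/eqP/val_inj => /=; have := ltn_ord a; lia.
apply/val_inj => /=; have := ltn_ord p; lia.
Qed.

Lemma bidx_bdo (p : 'I_(4 * n)) : bidx (bdo p) (bmo p) = p.
Proof. by apply/esym/eqP; rewrite bidx_eq !eqxx. Qed.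

Lemma bidx_inj (i j : 'I_n) (a b : 'I_4) :
  (bidx i a == bidx j b) = (i == j) && (a == b).
Proof.
rewrite bidx_eq.
have -> : bdo (bidx i a) = i by apply/val_inj => /=; have := ltn_ord a; lia.
have -> : bmo (bidx i a) = a by apply/val_inj => /=; have := ltn_ord a; lia.
by rewrite (eq_sym j) (eq_sym b).
Qed.

Lemma sum_pick (m : nat) (x : 'I_m) (f : 'I_m -> R) :
  \sum_q (q == x)%:R * f q = f x.
Proof.
rewrite (bigD1 x) //= eqxx mul1r big1 ?addr0 // => q /negbTE ->.
by rewrite mul0r.
Qed.

Lemma sum_pick' (m : nat) (x : 'I_m) (f : 'I_m -> R) :
  \sum_q f q * (q == x)%:R = f x.
Proof. by rewrite -[RHS](sum_pick x); apply: eq_bigr => q _; rewrite mulrC. Qed.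

Lemma sel_mul (i j : 'I_n) :
  sel i *m (sel j)^T = if i == j then 1%:M else 0.
Proof.
apply/matrixP => a b; rewrite !mxE.
under eq_bigr do rewrite !mxE.
rewrite sum_pick bidx_inj.
by case: (i == j); rewrite /= ?mxE.
Qed.

Lemma blkE (A : 'M[R]_(4 * n)) i j : blk A i j = sel i *m A *m (sel j)^T.
Proof.
apply/matrixP => a b; rewrite !mxE.
under eq_bigr do rewrite !mxE.
under eq_bigr do under eq_bigr do rewrite !mxE.
under eq_bigr do rewrite sum_pick.
by rewrite sum_pick'.
Qed.

Lemma sel_sum : \sum_i (sel i)^T *m sel i = 1%:M.
Proof.
apply/matrixP => p q; rewrite summxE !mxE.
under eq_bigr => i _ do rewrite mxE.
under eq_bigr => i _ do (under eq_bigr => a _ do rewrite !mxE).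
rewrite (bigD1 (bdo p)) //= (bigD1 (bmo p)) //= bidx_bdo eqxx mul1r.
rewrite big1 ?addr0; last first.
  by move=> a /negbTE ha; rewrite bidx_eq eqxx ha mul0r.
rewrite big1 ?addr0; last first.
  move=> i /negbTE hi; apply: big1 => a _.
  by rewrite bidx_eq hi mul0r.
by rewrite eq_sym.
Qed.

Lemma blk_decomp (A : 'M[R]_(4 * n)) :
  A = \sum_i \sum_j (sel i)^T *m blk A i j *m sel j.
Proof.
rewrite {1}(_ : A = (\sum_i (sel i)^T *m sel i) *m A *m (\sum_j (sel j)^T *m sel j)); last first.
  by rewrite sel_sum mul1mx mulmx1.
rewrite mulmx_suml mulmx_suml; apply: eq_bigr => i _.
rewrite mulmx_sumr; apply: eq_bigr => j _.
by rewrite blkE !mulmxA.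
Qed.

Lemma blk_sel (G : 'M[R]_4) i j i' j' :
  blk ((sel i)^T *m G *m sel j) i' j' = if (i' == i) && (j' == j) then G else 0.
Proof.
rewrite blkE !mulmxA sel_mul -!mulmxA sel_mul (eq_sym j).
case: (i' == i); case: (j' == j); rewrite /= ?mul1mx ?mulmx1 ?mul0mx ?mulmx0 //.
Qed.

Lemma blkD (A B : 'M[R]_(4 * n)) i j : blk (A + B) i j = blk A i j + blk B i j.
Proof. by rewrite !blkE mulmxDr mulmxDl. Qed.
Lemma blkN (A : 'M[R]_(4 * n)) i j : blk (- A) i j = - blk A i j.
Proof. by rewrite !blkE mulmxN mulNmx. Qed.
Lemma blkB (A B : 'M[R]_(4 * n)) i j : blk (A - B) i j = blk A i j - blk B i j.
Proof. by rewrite blkD blkN. Qed.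
Lemma blkZ c (A : 'M[R]_(4 * n)) i j : blk (c *: A) i j = c *: blk A i j.
Proof. by rewrite !blkE -scalemxAr -scalemxAl. Qed.
Lemma blk0 i j : blk (0 : 'M[R]_(4 * n)) i j = 0.
Proof. by rewrite blkE mulmx0 mul0mx. Qed.
Lemma blk_sum (I : Type) (r : seq I) (P : pred I) (F : I -> 'M[R]_(4 * n)) i j :
  blk (\sum_(k <- r | P k) F k) i j = \sum_(k <- r | P k) blk (F k) i j.
Proof.
rewrite blkE mulmx_sumr mulmx_suml; apply: eq_bigr => k _; by rewrite blkE.
Qed.
Lemma blk_tr (A : 'M[R]_(4 * n)) i j : blk A^T i j = (blk A j i)^T.
Proof. by rewrite !blkE !trmx_mul trmxK mulmxA. Qed.

Lemma blk_mkblk (F : 'I_n -> 'I_n -> 'M[R]_4) i j : blk (mkblk F) i j = F i j.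
Proof.
apply/matrixP => a b; rewrite !mxE.
have E1 : forall (k : 'I_n) (c : 'I_4), Ordinal (bdiv_proof (bidx k c)) = k.
  by move=> k c; apply/val_inj => /=; have := ltn_ord c; lia.
have E2 : forall (k : 'I_n) (c : 'I_4), Ordinal (bmod_proof (bidx k c)) = c.
  by move=> k c; apply/val_inj => /=; have := ltn_ord c; lia.
by rewrite !E1 !E2.
Qed.


Lemma frob_sel (G : 'M[R]_4) i j (W : 'M[R]_(4 * n)) :
  frob ((sel i)^T *m G *m sel j) W = frob G (blk W i j).
Proof.
rewrite /frob blkE !trmx_mul trmxK -!mulmxA mxtrace_mulC.
by rewrite !mulmxA.
Qed.


Lemma frob_blk (A W : 'M[R]_(4 * n)) :
  frob A W = \sum_i \sum_j frob (blk A i j) (blk W i j).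
Proof.
rewrite {1}(blk_decomp A) frob_suml; apply: eq_bigr => i _.
rewrite frob_suml; apply: eq_bigr => j _; exact: frob_sel.
Qed.

Lemma blk_ext (A B : 'M[R]_(4 * n)) : (forall i j, blk A i j = blk B i j) -> A = B.
Proof.
move=> h; rewrite (blk_decomp A) (blk_decomp B).
by apply: eq_bigr => i _; apply: eq_bigr => j _; rewrite h.
Qed.

Lemma trace_blk (W : 'M[R]_(4 * n)) : \tr W = \sum_i \tr (blk W i i).
Proof.
rewrite -[W in LHS]mulmx1 -sel_sum mulmx_sumr raddf_sum /=.
by apply: eq_bigr => i _; rewrite mulmxA mxtrace_mulC blkE mulmxA.
Qed.

Lemma qform_blk (W : 'M[R]_(4 * n)) (S : 'M[R]_(4, 4 * n)) (a : 'cV[R]_4) :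
  qform W (S^T *m a) = qform (S *m W *m S^T) a.
Proof. by rewrite -qform_cong trmxK. Qed.

End Blocks.


Section Compact.
Variable R : realType.
Variable m : nat.
Local Open Scope classical_set_scope.

Definition Tset (W : 'M[R]_m) := psd W /\ \tr W = 1.
Definition gfun (I : finType) (L : I -> 'M[R]_m) (W : 'M[R]_m) :=
  \sum_r (frob (L r) W) ^+ 2.

Lemma frob_entries (B W : 'M[R]_m) : frob B W = \sum_p \sum_q B p q * W p q.
Proof.
rewrite /frob /mxtrace; apply: eq_bigr => p _; rewrite mxE.
by apply: eq_bigr => q _; rewrite mxE.
Qed.

Lemma cont_sum (T : topologicalType) (I : Type) (r : seq I) (P : pred I)
   (F : I -> T -> R) :
  (forall i, continuous (F i)) -> continuous (fun x => \sum_(i <- r | P i) F i x).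
Proof.
move=> cF; elim: r => [|i r IH].
  under eq_fun do rewrite big_nil; exact: cst_continuous.
under eq_fun do rewrite big_cons.
case: (P i) => //.
move=> x; apply: continuousD; [exact: cF | exact: IH].
Qed.

Lemma cont_frob (B : 'M[R]_m) :
  continuous (fun x : 'rV[R]_(m * m) => frob B (vec_mx x)).
Proof.
under eq_fun do rewrite frob_entries.
apply: cont_sum => p; apply: cont_sum => q x.
under eq_fun do rewrite mxE.
apply: continuousM; first exact: cst_continuous.
exact: coord_continuous.
Qed.

Lemma T_entry (W : 'M[R]_m) p q : Tset W -> `|W p q| <= 1.
Proof.
move=> [pW tW].
have dg : forall r, W r r <= 1.
  move=> r; rewrite -tW /mxtrace (bigD1 r) //= lerDl.
  by apply: sumr_ge0 => i _; apply: psd_diag.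
have sW : W^T = W by case: pW.
have H : forall t : R, 0 <= W p p + 2 * t * W p q + t ^+ 2 * W q q.
  move=> t; case: pW => _ pW; have := pW (delta_mx p 0 + t *: delta_mx q 0).
  by rewrite qformDZ // !qformE !bil_delta.
have H1 := H 1; have H2 := H (-1).
have := dg p; have := dg q; move=> d1 d2.
rewrite ler_norml; apply/andP; split; nra.
Qed.

Lemma exists_min (I : finType) (L : I -> 'M[R]_m) : (0 < m)%N ->
  exists2 W, Tset W & forall W', Tset W' -> gfun L W <= gfun L W'.
Proof.
move=> m0.
pose Phi := [set phi : 'rV[R]_(m * m) -> R | exists B c,
  phi = (fun x => frob B (vec_mx x) + c) /\ forall W, Tset W -> 0 <= frob B W + c].
pose A := \bigcap_(phi in Phi) [set x | 0 <= phi x].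
have AT : forall x, A x -> Tset (vec_mx x).
  move=> x Ax.
  have F : forall B c, (forall W, Tset W -> 0 <= frob B W + c) -> 0 <= frob B (vec_mx x) + c.
    by move=> B c h; apply: (Ax (fun x => frob B (vec_mx x) + c)); exists B, c.
  have tr1 : \tr (vec_mx x) = 1.
    have e : forall W : 'M[R]_m, frob 1%:M W = \tr W.
      by move=> W; rewrite /frob mul1mx mxtrace_tr.
    have h1 : 0 <= frob 1%:M (vec_mx x) + -1 by apply: F => W tW; rewrite e (proj2 tW) subrr.
    have h2 : 0 <= frob (- 1%:M) (vec_mx x) + 1 by apply: F => W tW; rewrite frobNl e (proj2 tW) addNr.
    rewrite frobNl e in h2; rewrite e in h1; lra.
  split => //; split.
    apply/matrixP => p q; rewrite mxE.
    pose B : 'M[R]_m := delta_mx p q - delta_mx q p.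
    have e : forall W : 'M[R]_m, frob B W = W p q - W q p.
      move=> W; rewrite /B frobBl !frob_entries.
      rewrite (bigD1 p) //= (bigD1 q) //= mxE !eqxx mul1r big1 ?addr0; last first.
        by move=> j /negbTE hj; rewrite mxE hj andbF mul0r.
      rewrite big1 ?addr0; last first.
        by move=> i /negbTE hi; apply: big1 => j _; rewrite mxE hi mul0r.
      rewrite (bigD1 q) //= (bigD1 p) //= mxE !eqxx mul1r big1 ?addr0; last first.
        by move=> j /negbTE hj; rewrite mxE hj andbF mul0r.
      rewrite big1 ?addr0 //.
      by move=> i /negbTE hi; apply: big1 => j _; rewrite mxE hi mul0r.
    have sym0 : forall W, Tset W -> W p q - W q p = 0.
      by move=> W [[sW _] _]; rewrite -{1}sW mxE subrr.
    have h1 : 0 <= frob B (vec_mx x) + 0 by apply: F => W tW; rewrite e sym0 // addr0.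
    have h2 : 0 <= frob (- B) (vec_mx x) + 0 by apply: F => W tW; rewrite frobNl e sym0 // oppr0 addr0.
    rewrite addr0 e in h1; rewrite addr0 frobNl e in h2; lra.
  move=> v.
  have h : 0 <= frob (v *m v^T) (vec_mx x) + 0.
    by apply: F => W tW; rewrite addr0 frobC -qform_frob; case: tW => [[_ ->]].
  by rewrite addr0 frobC -qform_frob in h.
have TA : forall W, Tset W -> A (mxvec W).
  move=> W tW phi [B [c [-> h]]] /=; rewrite mxvecK; exact: h.
have cA : compact A.
  apply: bounded_closed_compact.
    rewrite /= /bounded_near.
    apply: filterS (nbhs_pinfty_ge (r := 1) (num_real _)) => M M1 x Ax /=.
    apply: le_trans M1.
    have -> : `|x| = mx_norm x by [].
    rewrite mx_normrE; apply: bigmax_le => // [[i j]] _ /=.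
    case: (mxvec_indexP j) => p q.
    rewrite (ord1 i) -{1}(vec_mxK x) mxvecE.
    exact: T_entry (AT _ Ax).
  apply: closed_bigI => phi [B [c [-> _]]].
  have hc : continuous (fun x : 'rV[R]_(m * m) => frob B (vec_mx x) + c).
    move=> x; apply: (@continuousD _ _ _ (fun x => frob B (vec_mx x)) (fun=> c)).
      exact: cont_frob.
    exact: cst_continuous.
  exact: (proj1 (continuous_closedP _) hc _ (@closed_ge _ 0)).
have A0 : A !=set0.
  exists (mxvec (delta_mx (Ordinal m0) (Ordinal m0))); apply: TA.
  split; last first.
    rewrite /mxtrace (bigD1 (Ordinal m0)) //= mxE !eqxx big1 ?addr0 //.
    by move=> i /negbTE hi; rewrite mxE hi.
  split; first by rewrite trmx_delta.
  move=> v.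
  have -> : (delta_mx (Ordinal m0) (Ordinal m0) : 'M[R]_m) =
     ((delta_mx (Ordinal m0) 0 : 'cV[R]_m)^T)^T *m 1%:M *m (delta_mx (Ordinal m0) 0)^T.
    by rewrite trmxK mulmx1 trmx_delta mul_delta_mx.
  rewrite qform_cong qformE /bil mulmx1 mx11_mul mxE -expr2.
  exact: sqr_ge0.
have cg : {within A, continuous (fun x => gfun L (vec_mx x))}.
  apply: continuous_subspaceT; rewrite /gfun.
  apply: cont_sum => r.
  have -> : (fun x : 'rV[R]_(m * m) => (frob (L r) (vec_mx x)) ^+ 2) =
     (fun x => frob (L r) (vec_mx x) * frob (L r) (vec_mx x)).
    by apply: funext => x; rewrite expr2.
  move=> x; apply: (@continuousM _ _ (fun x => frob (L r) (vec_mx x)) (fun x => frob (L r) (vec_mx x))); exact: cont_frob.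
have [x Ax minx] := compact_EVT_min A0 cA cg.
exists (vec_mx x); first by apply: AT; rewrite inE in Ax.
move=> W' tW'; have := minx (mxvec W'); rewrite mxvecK; apply.
by rewrite inE; apply: TA.
Qed.


Lemma t_lemma (a b : R) : 0 <= b ->
  (forall t : R, 0 < t -> t <= 1 -> 0 <= 2 * t * a + t ^+ 2 * b) -> 0 <= a.
Proof.
move=> b0 H; rewrite leNgt; apply/negP => a0.
have d0 : 0 < b - a + 1 by lra.
pose t := - a / (b - a + 1).
have t0 : 0 < t by rewrite /t divr_gt0 // oppr_gt0.
have t1 : t <= 1 by rewrite /t ler_pdivrMr // mul1r; lra.
have h := H t t0 t1.
have E : 2 * t * a + t ^+ 2 * b = t * (a * (b - 2 * a + 2)) / (b - a + 1).
  by rewrite /t; field; rewrite gt_eqF.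
rewrite E in h.
have hX : a * (b - 2 * a + 2) = (t * (a * (b - 2 * a + 2)) / (b - a + 1)) * ((b - a + 1) / t).
  by field; rewrite !gt_eqF.
have : 0 <= a * (b - 2 * a + 2).
  by rewrite hX; apply: mulr_ge0 => //; apply: divr_ge0; apply: ltW.
nra.
Qed.

Lemma Tset_conv (W1 W2 : 'M[R]_m) t : Tset W1 -> Tset W2 -> 0 <= t -> t <= 1 ->
  Tset (W1 + t *: (W2 - W1)).
Proof.
move=> [[s1 q1] t1] [[s2 q2] t2] t0 t1'; split; last first.
  by rewrite mxtraceD mxtraceZ raddfB /= t1 t2 subrr mulr0 addr0.
split; first by rewrite linearD /= linearZ /= linearB /= s1 s2.
move=> v; rewrite !qformE bilDm bilZm bilBm -!qformE.
have := q1 v; have := q2 v; nra.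
Qed.

Lemma separation (I : finType) (L : I -> 'M[R]_m) : (0 < m)%N ->
  (forall W, Tset W -> exists r, frob (L r) W != 0) ->
  exists c : I -> R, forall W, Tset W -> 0 < frob (\sum_r c r *: L r) W.
Proof.
move=> m0 HL.
have [Ws tWs minW] := exists_min L m0.
pose c r := frob (L r) Ws.
exists c => W tW.
have fE : forall X, frob (\sum_r c r *: L r) X = \sum_r c r * frob (L r) X.
  by move=> X; rewrite frob_suml; apply: eq_bigr => r _; rewrite frobZl.
have gpos : 0 < \sum_r c r * c r.
  have [r0 nz] := HL _ tWs.
  rewrite (bigD1 r0) //= ltr_pwDl ?sumr_ge0 // => [|r _]; last by rewrite -expr2 sqr_ge0.
  by rewrite -expr2 lt_def sqrf_eq0 nz sqr_ge0.
rewrite fE.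
pose d r := frob (L r) W - c r.
have var : 0 <= \sum_r c r * d r.
  apply: (@t_lemma _ (\sum_r d r * d r)).
    by apply: sumr_ge0 => r _; rewrite -expr2 sqr_ge0.
  move=> t t0 t1.
  have := minW _ (Tset_conv tWs tW (ltW t0) t1).
  rewrite /gfun.
  have -> : \sum_r frob (L r) (Ws + t *: (W - Ws)) ^+ 2 =
            \sum_r (c r * c r + (2 * t * (c r * d r) + t ^+ 2 * (d r * d r))).
    apply: eq_bigr => r _; rewrite frobDr frobZr frobBr /d /c; ring.
  rewrite big_split /= -(addr0 (\sum_r frob (L r) Ws ^+ 2)).
  have -> : \sum_r frob (L r) Ws ^+ 2 = \sum_r c r * c r.
    by apply: eq_bigr => r _; rewrite expr2.
  by rewrite addr0 lerDl big_split /= -!mulr_sumr.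
apply: (lt_le_trans gpos).
have -> : \sum_r c r * frob (L r) W = \sum_r c r * c r + \sum_r c r * d r.
  by rewrite -big_split /=; apply: eq_bigr => r _; rewrite /d; ring.
by rewrite lerDl.
Qed.

End Compact.


Section Prob.
Variable R : realType.
Variable l : nat.
Variables (Q : 'I_l -> 'M[R]_4) (c2 : 'I_l -> R).
Hypothesis sQ : forall k, (Q k)^T = Q k.

Local Notation o := (ord0 : 'I_l.+1).
Local Notation kk k := (lift ord0 k : 'I_l.+1).
Definition Ak k := 2^-1 *: (Q k - (c2 k)%:M).

Lemma sAk k : (Ak k)^T = Ak k.
Proof. by rewrite /Ak linearZ /= linearB /= sQ tr_scalar_mx. Qed.

Lemma unlift_o : unlift o o = None.
Proof. exact: unlift_none. Qed.
Lemma unlift_kk k : unlift o (kk k) = Some k.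
Proof. exact: liftK. Qed.

Lemma Qblk_oo : blk (Qcal Q c2) o o = 0.
Proof. by rewrite blk_mkblk unlift_o. Qed.
Lemma Qblk_ok k : blk (Qcal Q c2) o (kk k) = Ak k.
Proof. by rewrite blk_mkblk unlift_o unlift_kk. Qed.
Lemma Qblk_ko k : blk (Qcal Q c2) (kk k) o = Ak k.
Proof. by rewrite blk_mkblk unlift_o unlift_kk. Qed.
Lemma Qblk_kk j k : blk (Qcal Q c2) (kk j) (kk k) = 0.
Proof. by rewrite blk_mkblk !unlift_kk. Qed.

Lemma Bblk i j : blk (Bcal R l) i j = if (i == o) && (j == o) then 1%:M else 0.
Proof. by rewrite blk_mkblk. Qed.

Lemma split_sum (F : 'I_l.+1 -> R) : \sum_i F i = F o + \sum_k F (kk k).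
Proof. by rewrite big_ord_recl. Qed.

Lemma sQcal : (Qcal Q c2)^T = Qcal Q c2.
Proof.
apply: blk_ext => i j; rewrite blk_tr !blk_mkblk.
case: (unlift o i) => [a|]; case: (unlift o j) => [b|] //=; rewrite ?trmx0 ?sAk //.
Qed.

Lemma sBcal : (Bcal R l)^T = Bcal R l.
Proof.
apply: blk_ext => i j; rewrite blk_tr !Bblk andbC.
by case: ((i == o) && (j == o)); rewrite ?trmx0 ?tr_scalar_mx.
Qed.

Lemma frob1 (X : 'M[R]_4) : frob 1%:M X = \tr X.
Proof. by rewrite /frob mul1mx mxtrace_tr. Qed.

Lemma frob_Q (W : 'M[R]_(4 * l.+1)) :
  frob (Qcal Q c2) W = \sum_k (frob (Ak k) (blk W o (kk k)) + frob (Ak k) (blk W (kk k) o)).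
Proof.
rewrite frob_blk split_sum split_sum Qblk_oo frob0l add0r.
under [X in _ + X = _]eq_bigr => j _ do rewrite split_sum Qblk_ko.
under [X in _ + X = _]eq_bigr => j _ do under eq_bigr => k _ do rewrite Qblk_kk frob0l.
under [X in _ + X = _]eq_bigr => j _ do rewrite big1 // addr0.
rewrite -big_split; apply: eq_bigr => k _; congr (_ + _).
by rewrite -Qblk_ok.
Qed.

Lemma frob_B (W : 'M[R]_(4 * l.+1)) : frob (Bcal R l) W = \tr (blk W o o).
Proof.
rewrite frob_blk split_sum split_sum Bblk eqxx /= frob1.
rewrite big1 ?addr0; last by move=> k _; rewrite Bblk andbF frob0l.
rewrite big1 ?addr0 // => j _; rewrite split_sum Bblk /= frob0l add0r.
by apply: big1 => k _; rewrite Bblk /= frob0l.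
Qed.

Lemma tr_frob (A W : 'M[R]_(4 * l.+1)) : W^T = W -> \tr (A *m W) = frob A W.
Proof. by move=> sW; rewrite /frob sW. Qed.


Lemma neq_kk_o k : (kk k == o) = false.
Proof. by apply/negbTE; rewrite eq_sym neq_lift. Qed.

Lemma frob_D0 (D W : 'M[R]_(4 * l.+1)) : admissible_dual D -> W^T = W ->
  (forall k, blk W o (kk k) = blk W (kk k) (kk k)) -> frob D W = 0.
Proof.
move=> [sD [hD zD]] sW hW.
have Doo : blk D o o = 0 by apply: zD; rewrite eqxx.
have Djk : forall j k, j != k -> blk D (kk j) (kk k) = 0.
  move=> j k jk; apply: zD.
  by rewrite (inj_eq lift_inj) (negbTE jk) !neq_kk_o.
have Dko : forall k, blk D (kk k) o = (blk D o (kk k))^T by move=> k; rewrite -blk_tr sD.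
have Wko : forall k, blk W (kk k) o = (blk W o (kk k))^T by move=> k; rewrite -blk_tr sW.
rewrite frob_blk split_sum split_sum Doo frob0l add0r.
have E : forall j, \sum_i frob (blk D (kk j) i) (blk W (kk j) i) =
   frob (blk D o (kk j)) (blk W o (kk j)) + frob (blk D (kk j) (kk j)) (blk W (kk j) (kk j)).
  move=> j; rewrite split_sum Dko Wko frob_tr; congr (_ + _).
  rewrite (bigD1 j) //= big1 ?addr0 // => k jk.
  by rewrite Djk ?frob0l // eq_sym.
rewrite (eq_bigr _ (fun j _ => E j)).
rewrite -big_split /=; apply: big1 => k _.
rewrite hW addrA -!frobDl -mulr2n -scaler_nat addrC.
by rewrite (hD k) frob0l.
Qed.

Lemma weak (W D : 'M[R]_(4 * l.+1)) mu : SDR_feasible W -> D_feasible Q c2 mu D ->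
  mu <= \tr (Qcal Q c2 *m W).
Proof.
move=> [pW [hW tW]] [aD pM].
have sW : W^T = W by case: pW.
have := frob_psd pM pW.
rewrite !frobBl frobZl frob_B tW mulr1 (frob_D0 aD sW hW) subr0 -(tr_frob _ sW).
by rewrite subr_ge0.
Qed.

End Prob.


Section Compl.
Variable R : realType.
Variable l : nat.
Variables (Q : 'I_l -> 'M[R]_4) (c2 : 'I_l -> R).
Hypothesis sQ : forall k, (Q k)^T = Q k.

Local Notation o := (ord0 : 'I_l.+1).
Local Notation kk k := (lift ord0 k : 'I_l.+1).

Variable mu' : R.
Hypothesis Hmu : forall W, SDR_feasible W -> mu' <= \tr (Qcal Q c2 *m W).
Variable W : 'M[R]_(4 * l.+1).
Hypothesis pW : psd W.
Hypothesis hW : forall k, 2%:R *: blk W (kk k) (kk k) = blk W o (kk k) + blk W (kk k) o.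

Let X := blk W o o.
Let Z k := blk W (kk k) (kk k).
Let sW : W^T = W. Proof. by case: pW. Qed.
Let sX : X^T = X. Proof. by rewrite /X -blk_tr sW. Qed.
Let sZ k : (Z k)^T = Z k. Proof. by rewrite /Z -blk_tr sW. Qed.
Let qZ k a : 0 <= qform (Z k) a.
Proof. by rewrite /Z blkE -qform_blk; case: pW. Qed.

Let bilOK k a : bil a (blk W o (kk k)) a = qform (Z k) a.
Proof.
have h := hW k.
have : bil a (2%:R *: Z k) a = bil a (blk W o (kk k) + blk W (kk k) o) a by rewrite /Z h.
have E : blk W (kk k) o = (blk W o (kk k))^T by rewrite -blk_tr sW.
rewrite bilZm bilDm E bil_trm -qformE => e.
have : 2 * bil a (blk W o (kk k)) a = 2 * qform (Z k) a by rewrite mulr2n mulrDl mul1r e.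
lra.
Qed.

Let qXZ k a : qform (Z k) a <= qform X a.
Proof.
have := (proj2 pW) ((sel R o)^T *m a + (-1) *: ((sel R (kk k))^T *m a)).
rewrite qformDZ // !qform_blk -(blkE W o o) -(blkE W (kk k) (kk k)) bil_cong2 trmxK.
rewrite -(blkE W o (kk k)) bilOK -/X -/(Z k); lra.
Qed.

Let qX0 a : 0 <= qform X a.
Proof. by rewrite /X blkE -qform_blk; case: pW. Qed.


Lemma compl_eps (e : R) : 0 < e -> mu' * (\tr X + 4%:R * e) <= frob (Qcal Q c2) W.
Proof.
move=> e0.
pose Xe := X + e%:M.
have sXe : Xe^T = Xe by rewrite /Xe linearD /= sX tr_scalar_mx.
have qXe : forall a, qform Xe a = qform X a + e * qform 1%:M a.
  by move=> a; rewrite /Xe qformDm -[e%:M]scalemx1 qformZm.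
have q1 : forall a, 0 <= qform (1%:M : 'M[R]_4) a.
  move=> a; case: (eqVneq a 0) => [->|nz].
    by rewrite qformE /bil mulmx0 mxE.
  exact: ltW (qform1_gt0 nz).
have uXe : Xe \in unitmx.
  apply: unit_pd => v nz; rewrite qXe.
  have := qX0 v; have := qform1_gt0 nz; nra.
pose Y := invmx Xe.
have sY : Y^T = Y by rewrite /Y trmx_inv sXe.
have YX : Y *m Xe = 1%:M by rewrite mulVmx.
have XY : Xe *m Y = 1%:M by rewrite mulmxV.
have XYX : Xe^T *m Y *m Xe = Xe by rewrite sXe -mulmxA YX mulmx1.
have qY : forall u, 0 <= qform Y u.
  move=> u; have -> : u = Xe *m (Y *m u) by rewrite mulmxA XY mul1mx.
  rewrite -qform_cong XYX qXe; apply: addr_ge0; first exact: qX0.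
  by apply: mulr_ge0; [exact: ltW | exact: q1].
have qG : forall k b, 0 <= qform (Z k - Z k *m Y *m Z k) b.
  move=> k b.
  pose u := Z k *m b; pose y := Y *m u.
  have f1 : qform Xe y = qform Y u.
    rewrite /y -qform_cong sY -mulmxA.
    by rewrite mulmxA YX mul1mx.
  have f2 : bil y (Z k) b = qform Y u.
    by rewrite qformE /bil /y /u trmx_mul sY !mulmxA.
  have f3 : qform (Z k *m Y *m Z k) b = qform Y u.
    by rewrite /u -qform_cong sZ.
  have i1 : 0 <= qform Xe y - qform (Z k) y.
    rewrite qXe; have := qXZ k y; have := q1 y; nra.
  have i2 := qZ k (b + (-1) *: y).
  rewrite qformDZ // (bil_sym _ _ (sZ k)) f2 in i2.
  rewrite qformBm f3; rewrite f1 in i1; nra.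
pose Cb (i : 'I_l.+1) := if unlift o i is Some k then Z k else Xe.
pose Gd (i : 'I_l.+1) := if unlift o i is Some k then Z k - Z k *m Y *m Z k else 0.
pose C := \sum_i Cb i *m sel R i.
pose W' := C^T *m Y *m C + \sum_i (sel R i)^T *m Gd i *m sel R i.
have hC : forall j, C *m (sel R j)^T = Cb j.
  move=> j; rewrite /C mulmx_suml (bigD1 j) //= -mulmxA sel_mul eqxx mulmx1.
  rewrite big1 ?addr0 // => i /negbTE ij.
  by rewrite -mulmxA sel_mul ij mulmx0.
have blkW' : forall i j, blk W' i j = (Cb i)^T *m Y *m Cb j + (if i == j then Gd i else 0).
  move=> i j; rewrite /W' blkD blk_sum; congr (_ + _).
    by rewrite -(hC i) -(hC j) trmx_mul trmxK blkE !mulmxA.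
  under eq_bigr => i' _ do rewrite blk_sel.
  rewrite (bigD1 i) //= eqxx /= big1 ?addr0; last first.
    by move=> i' /negbTE h; rewrite eq_sym h.
  by rewrite eq_sym; case: (j == i) => //; case: eqP => // ->.
have sGd : forall i, (Gd i)^T = Gd i.
  move=> i; rewrite /Gd; case: (unlift o i) => [k|]; last by rewrite trmx0.
  by rewrite linearB /= !trmx_mul sY !sZ mulmxA.
have pW' : psd W'.
  split.
    rewrite /W' linearD /= !trmx_mul trmxK sY mulmxA; congr (_ + _).
    rewrite linear_sum /=; apply: eq_bigr => i _.
    by rewrite !trmx_mul trmxK sGd mulmxA.
  move=> v; rewrite /W' qformDm qform_summ; apply: addr_ge0.
    by rewrite qform_cong.
  apply: sumr_ge0 => i _; rewrite qform_cong /Gd.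
  case: (unlift o i) => [k|]; first exact: qG.
  by rewrite qformE /bil mulmx0 mul0mx mxE.
have bOO : blk W' o o = Xe.
  by rewrite blkW' /Cb /Gd unlift_o eqxx addr0 XYX.
have bOK : forall k, blk W' o (kk k) = Z k.
  move=> k; rewrite blkW' /Cb /Gd unlift_o unlift_kk.
  by rewrite eq_sym neq_kk_o addr0 sXe XY mul1mx.
have bKK : forall k, blk W' (kk k) (kk k) = Z k.
  move=> k; rewrite blkW' /Cb /Gd unlift_kk eqxx sZ addrC subrK.
  by [].
have bKO : forall k, blk W' (kk k) o = Z k.
  move=> k; rewrite blkW' /Cb /Gd unlift_o unlift_kk neq_kk_o addr0 sZ.
  by rewrite -mulmxA YX mulmx1.
pose t := \tr X + 4%:R * e.
have trX0 : 0 <= \tr X.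
  apply: sumr_ge0 => a _; apply: (@psd_diag _ _ X); split => //; exact: qX0.
have t0 : 0 < t by rewrite /t; lra.
have trXe : \tr Xe = t by rewrite /Xe mxtraceD mxtrace_scalar /t mulr_natl.
pose W'' := t^-1 *: W'.
have fW'' : SDR_feasible W''.
  split; first by apply: psd_scale => //; rewrite invr_ge0 ltW.
  split; first by move=> k; rewrite !blkZ bOK bKK.
  by rewrite blkZ mxtraceZ bOO trXe mulVf // gt_eqF.
have h := Hmu fW''.
have sW'' : W''^T = W'' by case: fW'' => [[]].
rewrite (tr_frob _ sW'') /W'' frobZr in h.
have EV : frob (Qcal Q c2) W' = frob (Qcal Q c2) W.
  rewrite !frob_Q; apply: eq_bigr => k _.
  rewrite bOK bKO -frobDr -frobDr -(hW k) -/(Z k).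
  by rewrite frobZr frobDr mulr2n mulrDl mul1r.
rewrite EV in h.
have H2 : mu' * t <= t^-1 * frob (Qcal Q c2) W * t by rewrite ler_pM2r.
by rewrite mulrAC mulVf ?gt_eqF // mul1r in H2.
Qed.


Lemma tr_Z_le k : \tr (Z k) <= \tr X.
Proof.
rewrite /mxtrace; apply: ler_sum => a _.
have := qXZ k (delta_mx a 0); by rewrite !qformE !bil_delta.
Qed.

Lemma relaxed_lb : mu' * \tr X <= frob (Qcal Q c2) W.
Proof.
set V := frob (Qcal Q c2) W.
case: (lerP 0 mu') => hm.
  have := compl_eps ltr01; rewrite -/V => h.
  apply: le_trans h; rewrite ler_wpM2l // lerDl mulr1; lra.
rewrite leNgt; apply/negP => hlt.
pose e := (mu' * \tr X - V) / (- (8%:R * mu')).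
have e0 : 0 < e by rewrite /e divr_gt0 // ?subr_gt0 // oppr_gt0 pmulr_rlt0.
have := compl_eps e0; rewrite -/V.
have -> : mu' * (\tr X + 4%:R * e) = mu' * \tr X - (mu' * \tr X - V) / 2.
  by rewrite /e; field; rewrite lt_eqF.
lra.
Qed.

End Compl.


Section Key.
Variable R : realType.
Variable l : nat.
Variables (Q : 'I_l -> 'M[R]_4) (c2 : 'I_l -> R).
Hypothesis sQ : forall k, (Q k)^T = Q k.

Local Notation o := (ord0 : 'I_l.+1).
Local Notation kk k := (lift ord0 k : 'I_l.+1).
Local Notation N := (4 * l.+1)%N.

Definition Dm (k : 'I_l) (E : 'M[R]_4) : 'M[R]_N :=
  (sel R (kk k))^T *m (2%:R *: E) *m sel R (kk k) - (sel R o)^T *m E *m sel R (kk k)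
  - (sel R (kk k))^T *m E *m sel R o.

Lemma frob_Dm k E (W : 'M[R]_N) :
  frob (Dm k E) W = frob E (2%:R *: blk W (kk k) (kk k) - blk W o (kk k) - blk W (kk k) o).
Proof. by rewrite /Dm !frobBl !frob_sel !frobBr frobZl frobZr. Qed.

Lemma blk_Dm k E i j : blk (Dm k E) i j =
  (if (i == kk k) && (j == kk k) then 2%:R *: E else 0)
  - (if (i == o) && (j == kk k) then E else 0)
  - (if (i == kk k) && (j == o) then E else 0).
Proof. by rewrite /Dm !blkB !blk_sel. Qed.

Lemma adm0 : admissible_dual (0 : 'M[R]_N).
Proof.
split; first by rewrite trmx0.
by split => [k|i j _]; rewrite !blk0 ?scaler0 ?addr0.
Qed.

Lemma admD (A B : 'M[R]_N) : admissible_dual A -> admissible_dual B -> admissible_dual (A + B).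
Proof.
move=> [sA [hA zA]] [sB [hB zB]]; split; first by rewrite linearD /= sA sB.
split => [k|i j h]; rewrite !blkD.
  by rewrite scalerDr addrACA hA hB addr0.
by rewrite zA // zB // addr0.
Qed.

Lemma admZ c (A : 'M[R]_N) : admissible_dual A -> admissible_dual (c *: A).
Proof.
move=> [sA [hA zA]]; split; first by rewrite linearZ /= sA.
split => [k|i j h]; rewrite !blkZ.
  by rewrite scalerA mulrC -scalerA -scalerDr hA scaler0.
by rewrite zA // scaler0.
Qed.

Lemma adm_sum (I : Type) (r : seq I) (P : pred I) (F : I -> 'M[R]_N) :
  (forall i, P i -> admissible_dual (F i)) -> admissible_dual (\sum_(i <- r | P i) F i).
Proof.
move=> h; elim/big_rec: _ => [|i x Pi ax]; first exact: adm0.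
by apply: admD => //; apply: h.
Qed.

Lemma admDm k E : E^T = E -> admissible_dual (Dm k E).
Proof.
move=> sE; split.
  rewrite /Dm !linearB /= !trmx_mul !trmxK linearZ /= sE.
  by rewrite !mulmxA addrAC.
split => [k'|i j h].
  rewrite !blk_Dm eqxx /= neq_kk_o andbF /= (inj_eq lift_inj).
  case: (k' == k) => /=.
    by rewrite !subr0 sub0r scalerN scaler_nat addrN.
  by rewrite !subr0 scaler0 addr0.
rewrite blk_Dm.
have h1 : ((i == kk k) && (j == kk k)) = false.
  apply/negP => /andP [/eqP e1 /eqP e2]; apply: h; rewrite e1 e2 eqxx neq_kk_o //.
have h2 : ((i == o) && (j == kk k)) = false.
  apply/negP => /andP [/eqP e1 /eqP e2]; apply: h; rewrite e1 e2 neq_kk_o eqxx /=.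
  by [].
have h3 : ((i == kk k) && (j == o)) = false.
  apply/negP => /andP [/eqP e1 /eqP e2]; apply: h; rewrite e1 e2 neq_kk_o eqxx /=.
  by [].
by rewrite h1 h2 h3 !subr0.
Qed.


Lemma frob_delta (a b : 'I_4) (X : 'M[R]_4) : frob (delta_mx a b) X = X a b.
Proof.
rewrite frob_entries (bigD1 a) //= (bigD1 b) //= mxE !eqxx mul1r big1 ?addr0; last first.
  by move=> j /negbTE hj; rewrite mxE hj andbF mul0r.
rewrite big1 ?addr0 // => i /negbTE hi; apply: big1 => j _.
by rewrite mxE hi mul0r.
Qed.

Definition Mmat mu : 'M[R]_N := Qcal Q c2 - mu *: Bcal R l.

Lemma sMmat mu : (Mmat mu)^T = Mmat mu.
Proof. by rewrite /Mmat linearB /= linearZ /= sQcal // sBcal. Qed.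

Variables (mu' mu : R).
Hypothesis Hmu : forall W, SDR_feasible W -> mu' <= \tr (Qcal Q c2 *m W).
Hypothesis hmu : mu < mu'.

Lemma Mpos (W : 'M[R]_N) : Tset W ->
  (forall k, 2%:R *: blk W (kk k) (kk k) = blk W o (kk k) + blk W (kk k) o) ->
  0 < frob (Mmat mu) W.
Proof.
move=> [pW tW] hW.
rewrite /Mmat frobBl frobZl frob_B.
have h1 := relaxed_lb Hmu pW hW.
set t := \tr (blk W o o) in h1 *.
have tpos : 0 < t.
  have hs : \sum_(k < l) \tr (blk W (kk k) (kk k)) <= t * l%:R.
    apply: (@le_trans _ _ (\sum_(k < l) t)).
      by apply: ler_sum => k _; exact: (tr_Z_le pW hW k).
    by rewrite sumr_const card_ord mulr_natr.
  have : t + \sum_(k < l) \tr (blk W (kk k) (kk k)) = 1.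
    by rewrite -tW trace_blk split_sum.
  have : 0 <= (l%:R : R) by [].
  nra.
have : 0 < (mu' - mu) * t by apply: mulr_gt0; rewrite ?subr_gt0.
lra.
Qed.

Lemma key : exists D, D_feasible Q c2 mu D.
Proof.
pose E (a b : 'I_4) : 'M[R]_4 := delta_mx a b + delta_mx b a.
have sE : forall a b, (E a b)^T = E a b by move=> a b; rewrite /E linearD /= !trmx_delta addrC.
pose L (r : option ('I_l * 'I_4 * 'I_4)) :=
  if r is Some t then Dm t.1.1 (E t.1.2 t.2) else Mmat mu.
have sL : forall r, (L r)^T = L r.
  by case=> [t|]; [case: (admDm t.1.1 (sE t.1.2 t.2)) | exact: sMmat].
have HL : forall W, Tset W -> exists r, frob (L r) W != 0.
  move=> W tW; case: (pickP (fun r => frob (L r) W != 0)) => [r hr|H]; first by exists r.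
  exfalso.
  have H0 : forall r, frob (L r) W = 0 by move=> r; have := H r => /negbFE /eqP.
  have sW : W^T = W by case: tW => [[]].
  have hW : forall k, 2%:R *: blk W (kk k) (kk k) = blk W o (kk k) + blk W (kk k) o.
    move=> k.
    pose P := 2%:R *: blk W (kk k) (kk k) - blk W o (kk k) - blk W (kk k) o.
    have sP : P^T = P.
      rewrite /P !linearB /= linearZ /= -!blk_tr sW.
      by rewrite addrAC.
    have P0 : P = 0.
      apply/matrixP => a b.
      have h := H0 (Some (k, a, b)); rewrite /= frob_Dm -/P /E frobDl !frob_delta in h.
      have e : P b a = P a b by rewrite -{1}sP mxE.
      rewrite [RHS]mxE; lra.
    by apply/eqP; rewrite -subr_eq0 opprD addrA -/P P0.
  have := Mpos tW hW; rewrite (H0 None) ltxx //.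
have N0 : (0 < N)%N by rewrite muln_gt0.
have [c hc] := separation N0 HL.
set Lam := \sum_r c r *: L r in hc.
pose s := c None.
pose Dr := \sum_(r | r != None) c r *: L r.
have hLam : Lam = s *: Mmat mu + Dr by rewrite /Lam (bigD1 None).
have aDr : admissible_dual Dr.
  apply: adm_sum => -[t _|//]; apply: admZ; exact: admDm.
pose W0 : 'M[R]_N := (sel R o)^T *m delta_mx 0 0 *m sel R o.
have bW0 : forall i j, blk W0 i j = if (i == o) && (j == o) then delta_mx 0 0 else 0.
  by move=> i j; rewrite blk_sel.
have sW0 : W0^T = W0 by rewrite /W0 !trmx_mul trmxK trmx_delta mulmxA.
have tW0 : Tset W0.
  split; last first.
    rewrite trace_blk split_sum bW0 eqxx big1 ?addr0.
      by rewrite /mxtrace (bigD1 0) //= mxE eqxx big1 ?addr0 // => i /negbTE hi; rewrite mxE hi.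
    by move=> k _; rewrite bW0 neq_kk_o mxtrace0.
  split => // v; rewrite /W0 qform_cong qformE /bil.
  move: (sel R o *m v) => x.
  have -> : (delta_mx 0 0 : 'M[R]_4) = (delta_mx 0 0 : 'cV[R]_4) *m (delta_mx 0 0)^T.
    by rewrite trmx_delta mul_delta_mx.
  rewrite !mulmxA -mulmxA mx11_mul.
  have -> : ((delta_mx 0 0 : 'cV[R]_4)^T *m x) 0 0 = (x^T *m (delta_mx 0 0 : 'cV[R]_4)) 0 0.
    by rewrite -[RHS]mx11_trE trmx_mul trmxK.
  by rewrite -expr2 sqr_ge0.
have rW0 : forall k, 2%:R *: blk W0 (kk k) (kk k) = blk W0 o (kk k) + blk W0 (kk k) o.
  by move=> k; rewrite !bW0 neq_kk_o /= ?andbF scaler0 addr0.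
have s0 : 0 < s.
  have := hc _ tW0; rewrite hLam frobDl frobZl (frob_D0 aDr sW0); last first.
    by move=> k; rewrite !bW0 neq_kk_o andbF.
  rewrite addr0 => h; have := Mpos tW0 rW0 => h'.
  by rewrite pmulr_lgt0 in h.
exists (- s^-1 *: Dr); split; first exact: admZ.
have -> : Qcal Q c2 - mu *: Bcal R l - - s^-1 *: Dr = s^-1 *: Lam.
  by rewrite hLam scalerDr scalerA mulVf ?gt_eqF // scale1r scaleNr opprK.
apply: psd_scale; first by rewrite invr_ge0 ltW.
split.
  rewrite /Lam linear_sum /=; apply: eq_bigr => r _; by rewrite linearZ /= sL.
move=> v; have [->|nz] := eqVneq v 0; first by rewrite qform0v.
pose q := qform 1%:M v.
have q0 : 0 < q := qform1_gt0 nz.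
pose W1 := q^-1 *: (v *m v^T).
have tW1 : Tset W1.
  split.
    apply: psd_scale; first by rewrite invr_ge0 ltW.
    split; first by rewrite trmx_mul trmxK.
    move=> u; rewrite qformE /bil !mulmxA -mulmxA mx11_mul.
    have -> : (v^T *m u) 0 0 = (u^T *m v) 0 0.
      by rewrite -[LHS]mx11_trE trmx_mul trmxK.
    by rewrite -expr2 sqr_ge0.
  change (\tr (q^-1 *: (v *m v^T)) = 1).
  rewrite mxtraceZ mxtrace_mulC /mxtrace big_ord1.
  have -> : (v^T *m v) 0 0 = q by rewrite /q qformE /bil mulmx1.
  by rewrite mulVf // gt_eqF.
have := hc _ tW1; rewrite /W1 frobZr qform_frob.
by rewrite pmulr_rgt0 ?invr_gt0 // => /ltW.
Qed.

End Key.


Lemma feasible_exists (R : realType) (l : nat) : exists W : 'M[R]_(4 * l.+1), SDR_feasible W.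
Proof.
pose W0 : 'M[R]_(4 * l.+1) := (sel R ord0)^T *m delta_mx 0 0 *m sel R ord0.
have bW0 : forall i j, blk W0 i j = if (i == ord0) && (j == ord0) then delta_mx 0 0 else 0.
  by move=> i j; rewrite blk_sel.
exists W0; split; last split.
- split; first by rewrite /W0 !trmx_mul trmxK trmx_delta mulmxA.
  move=> v; rewrite /W0 qform_cong qformE /bil.
  move: (sel R ord0 *m v) => x.
  have -> : (delta_mx 0 0 : 'M[R]_4) = (delta_mx 0 0 : 'cV[R]_4) *m (delta_mx 0 0)^T.
    by rewrite trmx_delta mul_delta_mx.
  rewrite !mulmxA -mulmxA mx11_mul.
  have -> : ((delta_mx 0 0 : 'cV[R]_4)^T *m x) 0 0 = (x^T *m (delta_mx 0 0 : 'cV[R]_4)) 0 0.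
    by rewrite -[RHS]mx11_trE trmx_mul trmxK.
  by rewrite -expr2 sqr_ge0.
- move=> k; have nk : (lift ord0 k == ord0 :> 'I_l.+1) = false.
    by apply/negbTE; rewrite eq_sym neq_lift.
  by rewrite !bW0 nk !andbF.
- rewrite bW0 eqxx /mxtrace (bigD1 0) //= mxE eqxx big1 ?addr0 // => i /negbTE hi.
  by rewrite mxE hi.
Qed.

Lemma real_between (R : realType) (p : R) (x : \bar R) :
  (forall r : R, r < p -> (r%:E <= x)%E) -> (p%:E <= x)%E.
Proof.
case: x => [d| |] h //.
- rewrite lee_fin leNgt; apply/negP => dp.
  have hr : (d + p) / 2 < p by lra.
  have := h _ hr; rewrite lee_fin; lra.
- by rewrite leey.
- have hr : p - 1 < p by lra.
  by have := h _ hr; rewrite leeNy_eq.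
Qed.

Unset Implicit Arguments.

Theorem proposition2p4 (R : realType) (l : nat)
  (y x : 'I_l -> 'cV[R]_3) (c2 : 'I_l -> R) (Q : 'I_l -> 'M[R]_4) :
  (forall k, 0 <= c2 k) ->
  (forall k, (Q k)^T = Q k) ->
  (forall k (w : 'cV[R]_4), sqnorm w = 1 ->
     qform (Q k) w = sqnorm (y k - rotq w *m x k)) ->
  SDR_value Q c2 = D_value Q c2.
Proof.
move=> _ sQ _.
apply/eqP; rewrite eq_le; apply/andP; split; last first.
  apply: ge_ereal_sup => _ [mu [D fD] <-].
  apply/ereal_infP => _ [W fW <-].
  by rewrite lee_fin /D_obj /SDR_obj lerD2r (weak fW fD).
have [W0 fW0] := feasible_exists R l.
have lbW : forall W, SDR_feasible W -> (SDR_value Q c2 <= (SDR_obj Q c2 W)%:E)%E.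
  by move=> W fW; apply: ereal_inf_lbound; exists W.
case E : (SDR_value Q c2) => [p| |] //.
  apply: real_between => r rp.
  pose sc := \sum_k c2 k.
  have Hmu : forall W, SDR_feasible W -> p - sc <= \tr (Qcal Q c2 *m W).
    move=> W fW; have := lbW W fW; rewrite E lee_fin /SDR_obj -/sc; lra.
  have [D fD] := key sQ Hmu (mu := r - sc) ltac:(lra).
  have -> : r = D_obj c2 (r - sc) by rewrite /D_obj -/sc subrK.
  by apply: ereal_sup_ubound; exists (r - sc) => //; exists D.
  by have := lbW W0 fW0; rewrite E.
by rewrite leNye.
Qed.
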